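(* Let $n\ge 2$. To each line of play of Planted Brussels Sprouts of order $n$ associate a sequence of transpositions $(t_1,\dots,t_{n-1})$ in the symmetric group $S_n$ as follows. Suppose the $k$-th move joins free arms with short labels $i$ and $j$. Let $i'$ and $j'$ be the short labels of the free arms immediately counterclockwise from the arm $i$ and from the arm $j$, respectively, within the region in which the move is made. Set $t_k=(i'\ j')$. Then the following hold: (1) $t_{n-1}t_{n-2}\cdots t_1=(1\,2\,\cdots\,n)$, where permutations are composed from right to left, so $t_1$ is applied first; (2) distinct lines of play give distinct sequences; (3) every sequence of $n-1$ transpositions $(t_1,\dots,t_{n-1})$ with $t_{n-1}\cdots t_1=(1\,2\,\cdots\,n)$ arises from some line of play. Hence these sequences are exactly the $n^{n-2}$ factorizations of the cycle $(1\,2\,\cdots\,n)$ into $n-1$ transpositions.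
   Context: Planted Brussels Sprouts of order $n$: start with a closed disk with $n$ marked points on its boundary circle, labeled $1,\dots,n$ in clockwise order. Attached to each marked point is an arm, a short segment pointing into the interior of the disk; these arms are free. A move consists of two steps. First, choose two free arms and join their free ends by a simple curve (an arc) in the disk that does not intersect any previously drawn arc or arm; the two joined arms cease to be free. Second, mark a point (a notch) on the arc, from which two new free arms emanate, one on each side of the arc. The game ends when no move is possible. A line of play is the full sequence of moves. Two lines of play are the same iff for each $k$ the arms joined at the $k$-th move coincide. Arms are identified by long labels: the original arm $i$ has long label $i$, and when arms with long labels $\alpha,\beta$ are joined, the new arms have long labels $(\alpha,\beta)$ and $(\beta,\alpha)$. Short labels: the original arm at point $i$ has short label $i$. If an arc joins arms with short labels $i$ and $j$, the two new arms receive short labels $i$ and $j$, placed so that, going clockwise around the notch, one sees the old arm $i$, the new arm $i$, the old arm $j$, and the new arm $j$. Regions and subgames: at any stage, the drawn arcs divide the disk into regions. The free arms in a region form a subgame, and any move joins two free arms of the same region. Within a region, the free arms carry distinct short labels and have a cyclic (clockwise) order around the region. ''Immediately counterclockwise'' refers to the preceding free arm in this cyclic order. For example, the first move joining original arms $i$ and $j$ yields $t_1=(i-1\ \ j-1)$, with indices taken mod $n$ in $\{1,\dots,n\}$. *)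

(* Defs.v *)
From mathcomp Require Import all_boot all_fingroup.
Set Implicit Arguments. Unset Strict Implicit. Unset Printing Implicit Defensive.

(* Marked points 1..n are represented by the ordinals 0..n-1 of 'I_n
   (label k+1 <-> ordinal k). *)

(* Long labels of arms: [Orig i] is the original arm at point i;
   joining arms with long labels a, b creates arms [Join a b] = (a,b)
   and [Join b a] = (b,a). *)
Inductive arm (n : nat) : Type :=
| Orig of 'I_n
| Join of arm n & arm n.

Fixpoint short n (x : arm n) : 'I_n :=
  match x with
  | Orig i => i
  | Join a _ => short a
  end.

(* A region is the clockwise cyclic list of its free arms; a position is
   the list of all regions (their order in the list is irrelevant). *)
Definition region n := seq (arm n).
Definition position n := seq (region n).

Definition init_pos n : position n := [:: map (@Orig n) (enum 'I_n)].

(* [move s a b s' i' j'] : in position s, joining free arms a and b is a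
   legal move leading to position s'; i' (resp. j') is the short label of
   the free arm immediately counterclockwise from a (resp. b) in their
   region.  If the region reads clockwise  a, A, b, B  (cyclically), the
   arc splits it into the region  A, (a,b)  and the region  B, (b,a);
   the new arm (a,b) has short label i = short a and lies on the side of
   A, as forced by the clockwise convention old i, new i, old j, new j
   around the notch. *)
Definition move n (s : position n) (a b : arm n) (s' : position n)
    (i' j' : 'I_n) : Prop :=
  exists (pre post : position n) (r : region n) (k : nat) (A B : region n),
    [/\ s = pre ++ r :: post,
        rot k r = a :: A ++ b :: B,
        s' = pre ++ (rcons A (Join a b)) :: (rcons B (Join b a)) :: post,
        i' = short (last b B) &
        j' = short (last a A)].

Definition terminal n (s : position n) : Prop :=
  ~ exists a b s' i' j', @move n s a b s' i' j'.

Inductive play n : position n -> seq (arm n * arm n) -> seq {perm 'I_n} -> Prop :=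
| play_end s : terminal s -> play s [::] [::]
| play_move s a b s' i' j' ms ts :
    move s a b s' i' j' -> play s' ms ts ->
    play s ((a, b) :: ms) (tperm i' j' :: ts).

Definition same_move n (m1 m2 : arm n * arm n) : Prop :=
  m1 = m2 \/ m1 = (m2.2, m2.1).

Inductive same_line n : seq (arm n * arm n) -> seq (arm n * arm n) -> Prop :=
| same_nil : same_line [::] [::]
| same_cons m1 m2 l1 l2 :
    same_move m1 m2 -> same_line l1 l2 -> same_line (m1 :: l1) (m2 :: l2).

(* Right-to-left composition: for ts = [:: t_1; ...; t_k],
   rl_prod ts = t_k o ... o t_1 as a function (t_1 applied first).
   In mathcomp, (s * t) x = t (s x), so this is t_1 * t_2 * ... * t_k. *)
Definition rl_prod n (ts : seq {perm 'I_n}) : {perm 'I_n} :=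
  foldr (fun t acc => (t * acc)%g) 1%g ts.

Definition is_transposition n (t : {perm 'I_n}) : Prop :=
  exists x y : 'I_n, x != y /\ t = tperm x y.

Definition is_long_cycle n (p : {perm 'I_n}) : Prop :=
  forall x : 'I_n, p x = ordS x.

(* Main.v *)
Require Import Defs.
From HB Require Import structures.
From mathcomp Require Import all_boot all_fingroup.
From mathcomp Require Import zify.
Set Implicit Arguments. Unset Strict Implicit. Unset Printing Implicit Defensive.

Section ArmEq.
Variable n : nat.
Fixpoint arm_eqb (x y : arm n) : bool :=
  match x, y with
  | Orig i, Orig j => i == j
  | Join a b, Join c d => arm_eqb a c && arm_eqb b d
  | _, _ => false
  end.
Lemma arm_eqP : Equality.axiom arm_eqb.
Proof.
move=> x; elim: x => [i|a IHa b IHb] [j|c d] /=; try by constructor.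
  by apply: (iffP eqP) => [->|[]].
case: (IHa c) => [->|nac]; last by constructor => -[].
case: (IHb d) => [->|nbd]; last by constructor => -[].
by constructor.
Qed.
HB.instance Definition _ := hasDecEq.Build (arm n) arm_eqP.
End ArmEq.

Lemma path_frel_ext (T : eqType) (f g : T -> T) x p :
  (forall z, z \in belast x p -> f z = g z) ->
  path (frel f) x p -> path (frel g) x p.
Proof.
elim: p x => [//|y p IH] x /= e /andP[/eqP fx hp].
rewrite -e ?inE ?eqxx // fx eqxx /=; apply: IH hp => z hz.
by apply: e; rewrite inE hz orbT.
Qed.

Lemma path_iter (T : eqType) (f : T -> T) x p y :
  path (frel f) x p -> y \in x :: p -> exists i, y = iter i f x.
Proof.
elim: p x => [|z p IH] x /=.
  by move=> _; rewrite inE => /eqP ->; exists 0.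
case/andP => /eqP fx hp; rewrite inE => /orP[/eqP ->|hy]; first by exists 0.
have [i ->] := IH _ hp hy; exists i.+1; by rewrite iterSr fx.
Qed.

Lemma key_path n (σ : {perm 'I_n}) i j LA LB :
  uniq (i :: LA ++ j :: LB) ->
  path (frel σ) i (rcons LA j) -> path (frel σ) j (rcons LB i) ->
  path (frel (tperm (last j LB) (last i LA) * σ)%g) i (rcons LA i).
Proof.
move=> u; rewrite !rcons_path => /andP[pA _] /andP[_ /eqP eB].
apply/andP; split; last by rewrite /= permM tpermR eB.
apply: path_frel_ext pA => z hz; rewrite permM tpermD //.
  have hz' := mem_belast hz.
  move: u; rewrite -cat_cons cat_uniq => /and3P[_ /hasPn dis _].
  apply/eqP => ez; have := dis _ (mem_last j LB); rewrite ez hz' //.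
move: (u); rewrite -cat_cons cat_uniq => /andP[+ _].
rewrite lastI rcons_uniq => /andP[nl _]; apply/eqP => ez.
by rewrite ez hz in nl.
Qed.

Section Main.
Variable n : nat.
Implicit Types (s : position n) (σ : {perm 'I_n}) (α : 'I_n -> arm n).

Definition Inv s σ α :=
  [/\ perm_eq (map (@short n) (flatten s)) (enum 'I_n),
      forall r, r \in s -> (0 < size r) && fcycle σ (map (@short n) r) &
      forall x, x \in flatten s -> α (short x) = x].

Lemma Inv_perm s1 s2 σ α : perm_eq s1 s2 -> Inv s1 σ α -> Inv s2 σ α.
Proof.
move=> p [H1 H2 H3]; have pf := perm_flatten p; split.
- by apply: perm_trans H1; rewrite perm_sym; apply: perm_map.
- by move=> r; rewrite -(perm_mem p); apply: H2.
- by move=> x; rewrite -(perm_mem pf); apply: H3.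
Qed.

Lemma Inv_rot k r rest σ α : Inv (r :: rest) σ α -> Inv (rot k r :: rest) σ α.
Proof.
move=> [H1 H2 H3]; split.
- rewrite /= map_cat; apply: perm_trans H1; rewrite /= map_cat.
  by rewrite perm_cat2r map_rot perm_rot.
- move=> r'; rewrite inE => /orP[/eqP->|].
    have := H2 r; rewrite inE eqxx => /(_ isT) /andP[a b].
    by rewrite size_rot a map_rot rot_cycle.
  by move=> hr; apply: H2; rewrite inE hr orbT.
- by move=> x; rewrite /= mem_cat mem_rot => hx; apply: H3; rewrite /= mem_cat.
Qed.

Lemma Inv_ext s σ α β : (forall x, α x = β x) -> Inv s σ α -> Inv s σ β.
Proof. by move=> e [H1 H2 H3]; split => // x hx; rewrite -e H3. Qed.


Definition upd α (a b : arm n) : 'I_n -> arm n :=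
  fun x => if x == short a then Join a b else if x == short b then Join b a else α x.

Lemma disj_uniq (T : eqType) (s1 s2 : seq T) x y :
  uniq (s1 ++ s2) -> x \in s1 -> y \in s2 -> x != y.
Proof.
rewrite cat_uniq => /and3P[_ /hasPn d _] hx hy; apply/eqP => e.
by have := d _ hy; rewrite -e hx.
Qed.

Lemma uniq_map_eq (T1 T2 : eqType) (f : T1 -> T2) l x y :
  uniq (map f l) -> x \in l -> y \in l -> f x = f y -> x = y.
Proof.
elim: l => [//|z l IH] /= /andP[nz u]; rewrite !inE.
case/orP => [/eqP->|hx]; case/orP => [/eqP->|hy] // e.
- by move: nz; rewrite e map_f.
- by move: nz; rewrite -e map_f.
- exact: IH.
Qed.

Lemma inv_step a b A B rest σ α :
  Inv ((a :: A ++ b :: B) :: rest) σ α ->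
  [/\ σ (short (last b B)) = short a, σ (short (last a A)) = short b,
     short a != short b, α (short a) = a /\ α (short b) = b &
     Inv (rcons A (Join a b) :: rcons B (Join b a) :: rest)
         (tperm (short (last b B)) (short (last a A)) * σ)%g (upd α a b)].
Proof.
move=> [H1 H2 H3].
rewrite -!(last_map (@short n)).
set i := short a; set j := short b.
set LA := map (@short n) A; set LB := map (@short n) B.
set Lr := map (@short n) (flatten rest).
have E : map (@short n) (flatten ((a :: A ++ b :: B) :: rest))
         = (i :: LA ++ j :: LB) ++ Lr by rewrite /= !map_cat.
have U : uniq ((i :: LA ++ j :: LB) ++ Lr) by rewrite -E (perm_uniq H1) enum_uniq.
have U1 : uniq (i :: LA ++ j :: LB) by move: U; rewrite cat_uniq => /andP[].
have := H2 _ (mem_head _ _) => /andP[_].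
rewrite /= map_cat /= rcons_cat /= cat_path /= -/LA -/LB -/i -/j.
case/and3P => pA0 /eqP eA pB.
have pA : path (frel σ) i (rcons LA j) by rewrite rcons_path pA0 /= eA eqxx.
have eB : σ (last j LB) = i by move: pB; rewrite rcons_path => /andP[_ /eqP].
have nij : i != j.
  move: U1 => /= /andP[+ _]; rewrite mem_cat inE negb_or.
  by case/andP => _; rewrite negb_or => /andP[].
have ha : α i = a.
  by apply: H3; apply/flattenP; exists (a :: A ++ b :: B); rewrite ?inE ?eqxx.
have hb : α j = b.
  apply: H3; apply/flattenP; exists (a :: A ++ b :: B); rewrite ?inE ?eqxx //.
  by rewrite mem_cat inE eqxx !orbT.
split => //.
have U1' : uniq (j :: LB ++ i :: LA).
  by rewrite -cat_cons uniq_catC.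
have P1 : perm_eq (map (@short n)
     (flatten (rcons A (Join a b) :: rcons B (Join b a) :: rest))) (enum 'I_n).
  rewrite /= !map_cat !map_rcons /=; apply: perm_trans H1; rewrite E /=.
  rewrite -/LA -/LB -/Lr -/i -/j.
  have -> : i :: (LA ++ j :: LB) ++ Lr = (i :: LA) ++ ((j :: LB) ++ Lr).
    by rewrite /= -catA.
  apply: perm_cat; first by rewrite perm_rcons.
  by apply: perm_cat; rewrite ?perm_rcons.
have U' : uniq (map (@short n) (flatten (rcons A (Join a b) :: rcons B (Join b a) :: rest))).
  by rewrite (perm_uniq P1) enum_uniq.
split => //.
- move=> r'; rewrite !inE => /or3P[/eqP->|/eqP->|hr].
  + rewrite size_rcons /= map_rcons /= -/LA -/i.
    rewrite -(rotr_cycle 1) rotr1_rcons /=.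
    exact: key_path U1 pA pB.
  + rewrite size_rcons /= map_rcons /= -/LB -/j.
    rewrite -(rotr_cycle 1) rotr1_rcons /= tpermC.
    exact: key_path U1' pB pA.
  + have := H2 r'; rewrite inE hr orbT => /(_ isT) /andP[-> C] /=.
    have sub : {subset map (@short n) r' <= Lr}.
      move=> x /mapP[y hy ->]; apply: map_f; apply/flattenP; by exists r'.
    have hj : last j LB \in i :: LA ++ j :: LB.
      by rewrite -cat_cons mem_cat mem_last orbT.
    have hi : last i LA \in i :: LA ++ j :: LB.
      by rewrite -cat_cons mem_cat mem_last.
    have eqc : {in mem (map (@short n) r') &,
      frel (tperm (last j LB) (last i LA) * σ)%g =2 frel σ}.
      move=> x y hx _ /=.
      by rewrite permM tpermD // (disj_uniq U _ (sub _ hx)).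
    by rewrite (eq_in_cycle eqc) ?allss.
- move=> x hx; rewrite /upd.
  have hX : Join a b \in flatten (rcons A (Join a b) :: rcons B (Join b a) :: rest).
    by apply/flattenP; exists (rcons A (Join a b)); rewrite ?inE ?eqxx // mem_rcons inE eqxx.
  have hY : Join b a \in flatten (rcons A (Join a b) :: rcons B (Join b a) :: rest).
    by apply/flattenP; exists (rcons B (Join b a)); rewrite ?inE ?eqxx ?orbT // mem_rcons inE eqxx.
  case: eqP => [ex|nx]; first by apply: (uniq_map_eq U' hX hx); rewrite ex.
  case: eqP => [ex|nx2]; first by apply: (uniq_map_eq U' hY hx); rewrite ex.
  apply: H3; move: hx; rewrite /= !mem_cat !mem_rcons !inE.
  case/or3P => [/orP[/eqP ex|h]|/orP[/eqP ex|h]|h];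
    try by move: nx nx2; rewrite ex.
  all: by rewrite !mem_cat ?in_cons h ?orbT.
Qed.

Lemma inv_move s a b s' i' j' σ α : Inv s σ α -> move s a b s' i' j' ->
  [/\ σ i' = short a, σ j' = short b, short a != short b,
     α (short a) = a /\ α (short b) = b & Inv s' (tperm i' j' * σ)%g (upd α a b)]
  /\ size s' = (size s).+1.
Proof.
move=> H [pre [post [r [k [A [B [es er es' ei ej]]]]]]]; subst.
split; last by rewrite !size_cat /= addnS.
have I1 : Inv (r :: pre ++ post) σ α.
  apply: Inv_perm H; apply/permPl; exact: (perm_catCA pre [:: r] post).
have := Inv_rot k I1; rewrite er => /inv_step [e1 e2 e3 e4 I2].
split => //; apply: Inv_perm I2; apply/permPl.
exact: (perm_catCA [:: rcons A (Join a b); rcons B (Join b a)] pre post).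
Qed.

Lemma inv_size_le s σ α : Inv s σ α -> size s <= n.
Proof.
move=> [H1 H2 _].
have E : size (flatten s) = n by rewrite -(size_map (@short n)) (perm_size H1) size_enum_ord.
apply: (leq_trans _ (eq_leq E)); rewrite size_flatten.
clear E H1.
elim: s H2 => [//|r s IH] H2 /=.
have := H2 r (mem_head _ _) => /andP[hr _].
rewrite -add1n leq_add //; apply: IH => r' hr'; apply: H2; rewrite inE hr' orbT //.
Qed.

Lemma terminal_size1 s σ α : Inv s σ α -> terminal s -> forall r, r \in s -> size r = 1.
Proof.
move=> [_ H2 _] T r hr.
have := H2 r hr => /andP[hs _].
case E: r hs => [//|a [//|b B]] _.
case: T; exists a, b.
move: hr; rewrite E => /splitPr [pre post].
exists (pre ++ rcons [::] (Join a b) :: rcons B (Join b a) :: post).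
exists (short (last b B)), (short (last a [::])).
by exists pre, post, (a :: b :: B), 0, [::], B; rewrite rot0.
Qed.

Lemma part1 s ms ts σ α : Inv s σ α -> play s ms ts ->
  size ts + size s = n /\ rl_prod ts = σ.
Proof.
move=> H P; elim: P σ α H => {s ms ts}.
  move=> s T σ α H; have S1 := terminal_size1 H T.
  case: H => [H1 H2 H3]; split.
    have E : size (flatten s) = n by rewrite -(size_map (@short n)) (perm_size H1) size_enum_ord.
    rewrite add0n; apply: etrans E; rewrite size_flatten.
    elim: s S1 {H1 H2 H3 T} => [//|r s IH] S1 /=.
    rewrite S1 ?mem_head // IH // => r' hr'; apply: S1; rewrite inE hr' orbT //.
  apply/permP => x; rewrite perm1.
  have : x \in map (@short n) (flatten s) by rewrite (perm_mem H1) mem_enum.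
  case/mapP => y /flattenP [r hr hy] ->.
  have := H2 r hr => /andP[_]; have := S1 r hr.
  case: r hr hy => [//|z [|//]] _; rewrite inE => /eqP -> _ /=.
  by rewrite andbT => /eqP.
move=> s a b s' i' j' ms ts M P IH σ α H.
have [[e1 e2 ne [ha hb] I'] Sz] := inv_move H M.
have [IH1 IH2] := IH _ _ I'; split.
  by move: IH1; rewrite Sz /= addSnnS.
by rewrite /= IH2 mulgA tperm2 mul1g.
Qed.

Lemma tperm_eq_cases (x y u v : 'I_n) : x != y -> tperm x y = tperm u v ->
  (u = x /\ v = y) \/ (u = y /\ v = x).
Proof.
move=> nxy e; have := congr1 (fun p : {perm 'I_n} => p x) e.
rewrite tpermL; case: tpermP => [->|->|hu hv]; [by left|by right|].
by move=> exy; rewrite exy eqxx in nxy.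
Qed.

Lemma part2 s1 ms1 ts σ α : Inv s1 σ α -> play s1 ms1 ts ->
  forall s2 ms2, Inv s2 σ α -> play s2 ms2 ts -> same_line ms1 ms2.
Proof.
move=> H P; elim: P σ α H => {s1 ms1 ts}.
  by move=> s T σ α _ s2 ms2 _ P2; inversion P2; constructor.
move=> s a b s' i' j' ms ts M P IH σ α H s2 ms2 H2 P2.
inversion P2 as [|s0 c d s2' i2 j2 ms2' ts0 M2 P2' E1 E2 E3]; subst.
have [[e1 e2 ne [ha hb] I'] _] := inv_move H M.
have [[f1 f2 nf [hc hd] I2'] _] := inv_move H2 M2.
have nij : i' != j' by apply: contraNneq ne => e; rewrite -e1 -e2 e.
have [[ei ej]|[ei ej]] := tperm_eq_cases nij (esym E3); subst i2 j2.
- have ec : c = a by rewrite -hc -f1 e1 ha.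
  have ed : d = b by rewrite -hd -f2 e2 hb.
  subst c d; constructor; first by left.
  exact: (IH _ _ I' _ _ I2' P2').
- have ec : c = b by rewrite -hc -f1 e2 hb.
  have ed : d = a by rewrite -hd -f2 e1 ha.
  subst c d; constructor; first by right.
  apply: (IH _ _ I' _ _ _ P2'); rewrite tpermC.
  apply: Inv_ext I2' => x; rewrite /upd.
  case: eqP => [->|]; case: eqP => // e; by rewrite e eqxx in ne.
Qed.

Lemma porbits1 : #|porbits (1 : {perm 'I_n})| = n.
Proof.
rewrite /porbits card_imset ?card_ord // => x y e.
have : x \in porbit 1 y by rewrite -e porbit_id.
by case/porbitP => i ->; rewrite expg1n perm1.
Qed.

Lemma porbits_lb (ts : seq {perm 'I_n}) : (forall t, t \in ts -> is_transposition t) ->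
  n <= #|porbits (rl_prod ts)| + size ts.
Proof.
elim: ts => [|t ts IH] H; first by rewrite /rl_prod /= porbits1 addn0.
have [x [y [nxy ->]]] := H t (mem_head _ _).
have := porbits_mul_tperm (rl_prod ts) x y; rewrite nxy.
have := IH (fun u hu => H u (introT orP (or_intror hu))).
have -> : rl_prod (tperm x y :: ts) = (tperm x y * rl_prod ts)%g by [].
case: (x \in porbit _ y) => /= h1 h2; move: h1 h2.
  all: set a := #|porbits (tperm x y * _)%g|; set b := #|porbits (rl_prod ts)|; lia.
Qed.

Lemma porbits_ub s σ α : Inv s σ α -> #|porbits σ| <= size s.
Proof.
move=> [H1 H2 H3].
pose g (r : region n) := if r is z :: _ then porbit σ (short z) else set0.
rewrite -(size_map g); apply: (@leq_trans #|map g s|); last exact: card_size.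
apply: subset_leq_card; apply/subsetP => P /imsetP [x _ ->].
have : x \in map (@short n) (flatten s) by rewrite (perm_mem H1) mem_enum.
case/mapP => y /flattenP [r hr hy] ->.
apply/mapP; exists r => //.
have := H2 r hr; case: r hr hy => [//|z r'] hr hy /andP[_].
rewrite /= rcons_path => /andP[pz _].
have : short y \in short z :: map (@short n) r' by apply: (map_f (@short n) hy).
case/(path_iter pz) => i ey.
apply/eqP; rewrite eq_porbit_mem; apply/porbitP; exists i; by rewrite permX.
Qed.

Lemma fcycle_closed σ L z : fcycle σ L -> z \in L -> σ z \in L.
Proof. by move=> C hz; have := next_cycle C hz => /eqP ->; rewrite mem_next. Qed.

Lemma orbit_closed σ L x y : fcycle σ L -> y \in L -> x \in porbit σ y -> x \in L.
Proof.
move=> C hy /porbitP [i ->]; rewrite permX; elim: i => //= i IH.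
exact: fcycle_closed.
Qed.


Lemma part3 (ts : seq {perm 'I_n}) : forall s σ α, Inv s σ α ->
  (forall t, t \in ts -> is_transposition t) ->
  size ts + size s = n -> rl_prod ts = σ -> exists ms, play s ms ts.
Proof.
elim: ts => [|t ts IH] s σ α H HT Sz E.
  exists [::]; constructor => -[a [b [s' [i' [j' M]]]]].
  have [[_ _ _ _ I'] Sz'] := inv_move H M; have h := inv_size_le I'.
  move: h Sz; rewrite Sz' /=; lia.
have [x [y [nxy et]]] := HT t (mem_head _ _).
have HT' : forall u, u \in ts -> is_transposition u.
  by move=> u hu; apply: HT; rewrite inE hu orbT.
have Eq : (tperm x y * σ)%g = rl_prod ts by rewrite -E /= et mulgA tperm2 mul1g.
have lb := porbits_lb HT'; have ub := porbits_ub H.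
have pm := porbits_mul_tperm σ x y; rewrite /= Eq nxy in pm.
have hxy : x \in porbit σ y.
  apply/negPn/negP => hn; rewrite hn /= in pm; move: lb ub pm Sz => /=.
  set q := #|porbits (rl_prod ts)|; set p := #|porbits σ|; lia.
case: H => H1 H2 H3.
have : y \in map (@short n) (flatten s) by rewrite (perm_mem H1) mem_enum.
case/mapP => z /flattenP [r hr hz] ey.
have /andP[_ C] := H2 r hr.
have yL : y \in map (@short n) r by rewrite ey map_f.
have xL : x \in map (@short n) r := orbit_closed C yL hxy.
have sxL := fcycle_closed C xL; have syL := fcycle_closed C yL.
have arm_of : forall w, w \in map (@short n) r -> α w \in r /\ short (α w) = w.
  move=> w /mapP [v hv ->]; rewrite H3 //; apply/flattenP; by exists r.
have [ar sa] := arm_of _ sxL; have [br sb] := arm_of _ syL.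
set a := α (σ x) in ar sa; set b := α (σ y) in br sb.
have nab : a != b.
  apply: contraNneq nxy => eab; apply/eqP; apply: (@perm_inj _ σ).
  by rewrite -sa -sb eab.
case: (rot_to ar) => k r1 er.
have : b \in a :: r1 by rewrite -er mem_rot.
rewrite inE eq_sym (negbTE nab) /= => hb.
case/splitPr: hb er => A B er.
case/splitPr: hr H1 H2 H3 Sz => pre post H1 H2 H3 Sz.
have M : move (pre ++ r :: post) a b
   (pre ++ rcons A (Join a b) :: rcons B (Join b a) :: post)
   (short (last b B)) (short (last a A)).
  by exists pre, post, r, k, A, B; split.
have H' : Inv (pre ++ r :: post) σ α by split.
have [[e1 e2 _ _ I'] Sz'] := inv_move H' M.
have ex : short (last b B) = x by apply: (@perm_inj _ σ); rewrite e1 sa.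
have ey' : short (last a A) = y by apply: (@perm_inj _ σ); rewrite e2 sb.
rewrite ex ey' in I' M.
have Sz2 : size ts + size (pre ++ [:: rcons A (Join a b), rcons B (Join b a) & post]) = n.
  by rewrite Sz'; apply: etrans Sz; rewrite [in RHS]/= addSnnS.
have [ms P] := IH _ _ _ I' HT' Sz2 (esym Eq).
by exists ((a, b) :: ms); rewrite et; apply: play_move M P.
Qed.

End Main.

Lemma fcycle_traject (T : eqType) (f : T -> T) x m :
  iter m.+1 f x = x -> fcycle f (traject f x m.+1).
Proof.
by move=> e; rewrite /= rcons_path fpath_traject /= last_traject -iterS e eqxx.
Qed.

Lemma enum_traject m : enum 'I_m.+1 = traject (@ordS m.+1) ord0 m.+1.
Proof.
apply: (eq_from_nth (x0 := ord0)); first by rewrite size_enum_ord size_traject.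
move=> i; rewrite size_enum_ord => hi; rewrite nth_traject //; apply: val_inj.
rewrite /= nth_enum_ord //.
elim: i hi => [//|i IH] hi /=.
by rewrite -IH ?(ltnW hi) // modn_small.
Qed.

Lemma iter_ordS m : iter m.+1 (@ordS m.+1) ord0 = ord0.
Proof.
apply: val_inj; rewrite iterSr.
have : forall i, i <= m -> val (iter i (@ordS m.+1) (ordS ord0)) = (i.+1 %% m.+1).
  elim => [|i IH] hi /=; first by [].
  by rewrite IH ?(ltnW hi) // (modn_small (m := i.+1)).
by move/(_ m (leqnn m)) => ->; rewrite modnn.
Qed.

Lemma inv_init m :
  Inv (init_pos m.+1) (perm (@ordS_inj m.+1)) (@Orig m.+1).
Proof.
have ES : map (@short m.+1) (map (@Orig m.+1) (enum 'I_m.+1)) = enum 'I_m.+1.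
  by rewrite -map_comp; apply: map_id.
split.
- by rewrite /init_pos /= cats0 ES.
- move=> r; rewrite /init_pos inE => /eqP ->.
  rewrite size_map size_enum_ord /= ES.
  have -> : fcycle (perm (@ordS_inj m.+1)) (enum 'I_m.+1) = fcycle (@ordS m.+1) (enum 'I_m.+1).
    by apply: eq_cycle => u v /=; rewrite permE.
  by rewrite enum_traject fcycle_traject // iter_ordS.
- by move=> x; rewrite /init_pos /= cats0 => /mapP [i _ ->].
Qed.

Theorem theorem5 (n : nat) (hn : 2 <= n) :
  (forall ms ts, play (init_pos n) ms ts ->
     size ts = n.-1 /\ is_long_cycle (rl_prod ts))
  /\ (forall ms1 ms2 ts, play (init_pos n) ms1 ts -> play (init_pos n) ms2 ts ->
        same_line ms1 ms2)
  /\ (forall ts : seq {perm 'I_n},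
        size ts = n.-1 -> (forall t, t \in ts -> is_transposition t) ->
        is_long_cycle (rl_prod ts) ->
        exists ms, play (init_pos n) ms ts).
Proof.
case: n hn => [//|m] _.
have I0 := inv_init m.
split; [|split].
- move=> ms ts P; have [Sz E] := part1 I0 P; split.
    by move: Sz; rewrite /= addn1 => -[].
  by move=> x; rewrite E permE.
- by move=> ms1 ms2 ts P1 P2; apply: (part2 I0 P1 I0 P2).
- move=> ts Sz HT LC; apply: (part3 I0 HT).
    by rewrite Sz /= addn1.
  by apply/permP => x; rewrite LC permE.
Qed.
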